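(* Let $(G,\delta)$ be a nilpotent $\mathbb Q$-scalable group of step $s$ that is generated as a group by $\{\delta_q(x_i):q\in\mathbb Q,1\le i\le r\}$ for some $x_1,\dots,x_r\in V_1(G)$. Then the abelian group $G^{(s)}$ is a $\mathbb Q$-vector space (with the group product as addition), where for $s=1$ the scalar multiplication is $\sigma_q=\delta_q$, and for $s\ge2$ the scalar multiplication is the well-defined map $\sigma_{n/m}(z):=\delta_m^{-1}\big(z^{n m^{s-1}}\big)$ ($n\in\mathbb Z$, $m\in\mathbb N$). Moreover, if $s\ge 2$ and $z=[x,w]\in G^{(s)}$ with $x\in V_1(G)$ and $w\in G^{(s-1)}$, then $\sigma_q(z)=[\delta_q(x),w]$ for all $q\in\mathbb Q$.
   Context: A $\mathbb Q$-scalable group is a group $G$ with a map $\delta\colon\mathbb Q\times G\to G$ such that $\delta_\lambda$ is an automorphism for $\lambda\ne0$, $\delta_\lambda\circ\delta_\mu=\delta_{\lambda\mu}$ for $\lambda,\mu\in\mathbb Q$, and $\delta_0\equiv e_G$. $V_1(G):=\{p:\delta_{t+s}(p)=\delta_t(p)\delta_s(p)\ \forall t,s\in\mathbb Q\}$. $[g,h]=ghg^{-1}h^{-1}$; $G^{(1)}=G$, $G^{(k)}=\langle[G,G^{(k-1)}]\rangle$; step $s$ means $G^{(s+1)}=\{e\}\ne G^{(s)}$. A $\mathbb Q$-vector space structure on an abelian group $G$ is a map $\sigma\colon\mathbb Q\times G\to G$ with $\sigma_q\sigma_p=\sigma_{qp}$, $\sigma_q(g)\sigma_p(g)=\sigma_{q+p}(g)$,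 $\sigma_1=\mathrm{id}$, $\sigma_q(g)\sigma_q(h)=\sigma_q(gh)$. *)

(* Defs.v *)
From HB Require Import structures.
From mathcomp Require Import all_boot all_order all_algebra.
Set Implicit Arguments. Unset Strict Implicit. Unset Printing Implicit Defensive.
Import Order.TTheory GRing.Theory Num.Theory.
Local Open Scope ring_scope.

Record Grp := {
  carrier :> Type;
  gmul : carrier -> carrier -> carrier;
  ginv : carrier -> carrier;
  gone : carrier;
  gmulA : forall x y z, gmul x (gmul y z) = gmul (gmul x y) z;
  gmul1 : forall x, gmul gone x = x;
  gmulg1 : forall x, gmul x gone = x;
  gmulV : forall x, gmul (ginv x) x = gone;
  gmulgV : forall x, gmul x (ginv x) = gone
}.

Section GroupDefs.
Variable G : Grp.

Definition is_automorphism (f : G -> G) : Prop :=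
  (forall x y, f (gmul x y) = gmul (f x) (f y)) /\ bijective f.

Definition is_Qscalable (delta : rat -> G -> G) : Prop :=
  [/\ (forall l : rat, l != 0 -> is_automorphism (delta l)),
      (forall l m : rat, forall g, delta l (delta m g) = delta (l * m) g)
    & (forall g, delta 0 g = gone G)].

Definition V1 (delta : rat -> G -> G) (p : G) : Prop :=
  forall t s : rat, delta (t + s) p = gmul (delta t p) (delta s p).

Definition comm (g h : G) : G := gmul (gmul (gmul g h) (ginv g)) (ginv h).

Inductive gen (S : G -> Prop) : G -> Prop :=
  | gen_one : gen S (gone G)
  | gen_base : forall x, S x -> gen S x
  | gen_mul : forall x y, gen S x -> gen S y -> gen S (gmul x y)
  | gen_inv : forall x, gen S x -> gen S (ginv x).

(* lcs0 n = G^(n+1) *)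
Fixpoint lcs0 (n : nat) : G -> Prop :=
  match n with
  | 0 => fun _ => True
  | n'.+1 => gen (fun y => exists g h, lcs0 n' h /\ y = comm g h)
  end.

Definition lcs (k : nat) : G -> Prop := lcs0 k.-1.

Definition nilpotent_step (s : nat) : Prop :=
  (1 <= s)%N /\ (forall g, lcs s.+1 g -> g = gone G) /\
  (exists g, lcs s g /\ g <> gone G).

Definition gpow (g : G) (n : int) : G :=
  match n with
  | Posz k => iter k (gmul g) (gone G)
  | Negz k => ginv (iter k.+1 (gmul g) (gone G))
  end.

(* the scalar multiplication of the theorem:
   s = 1 : sigma_q = delta_q ;
   s >= 2: sigma_{n/m}(z) = delta_m^{-1}(z^(n m^(s-1))), computed on the
   reduced representation q = numq q / denq q, with delta_m^{-1} = delta_{1/m}. *)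
Definition sigma (delta : rat -> G -> G) (s : nat) (q : rat) (z : G) : G :=
  if s == 1%N then delta q z
  else delta ((denq q)%:~R)^-1 (gpow z (numq q * denq q ^+ s.-1)).

Definition Qvector_space_on (H : G -> Prop) (sg : rat -> G -> G) : Prop :=
  [/\ (forall q g, H g -> H (sg q g)),
      (forall q p g, H g -> sg q (sg p g) = sg (q * p) g),
      (forall q p g, H g -> gmul (sg q g) (sg p g) = sg (q + p) g),
      (forall g, H g -> sg 1 g = g)
    & (forall q g h, H g -> H h -> gmul (sg q g) (sg q h) = sg q (gmul g h))].

End GroupDefs.

(* Main.v *)
Require Import Defs.
From HB Require Import structures.
From mathcomp Require Import all_boot all_order all_algebra.
From mathcomp Require Import zify ring.
Import Order.TTheory GRing.Theory Num.Theory.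
Set Implicit Arguments. Unset Strict Implicit. Unset Printing Implicit Defensive.

Section Grp1.
Variable G : Grp.
Local Notation "a ** b" := (@gmul G a b) (at level 40, left associativity).
Local Notation e := (gone G).
Local Notation inv := (@ginv G).

Lemma gmulKV (x y : G) : x ** y ** inv y = x.
Proof. by rewrite -gmulA gmulgV gmulg1. Qed.
Lemma gmulVK (x y : G) : x ** inv y ** y = x.
Proof. by rewrite -gmulA gmulV gmulg1. Qed.
Lemma gmulI (x y z : G) : x ** y = x ** z -> y = z.
Proof. by move=> H; rewrite -(gmul1 y) -(gmulV x) -gmulA H gmulA gmulV gmul1. Qed.
Lemma gmulIr (x y z : G) : y ** x = z ** x -> y = z.
Proof. by move=> H; rewrite -(gmulKV y x) H gmulKV. Qed.
Lemma ginv_uniq (x y : G) : x ** y = e -> y = inv x.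
Proof. by move=> H; apply: (@gmulI x); rewrite H gmulgV. Qed.
Lemma ginvK (x : G) : inv (inv x) = x.
Proof. by symmetry; apply: ginv_uniq; rewrite gmulV. Qed.
Lemma ginv_mul (x y : G) : inv (x ** y) = inv y ** inv x.
Proof. by symmetry; apply: ginv_uniq; rewrite gmulA gmulKV gmulgV. Qed.
Lemma ginv1 : inv e = e.
Proof. by symmetry; apply: ginv_uniq; rewrite gmul1. Qed.

End Grp1.

Ltac gsimp := repeat progress rewrite ?ginv_mul ?ginvK ?ginv1 ?gmulA ?gmulKV ?gmulVK
   ?gmulV ?gmulgV ?gmul1 ?gmulg1.

Section Grp2.
Variable G : Grp.
Local Notation "a ** b" := (@gmul G a b) (at level 40, left associativity).
Local Notation e := (gone G).
Local Notation inv := (@ginv G).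

Lemma comm_inv (g h : G) : inv (comm g h) = comm h g.
Proof. rewrite /comm; gsimp; done. Qed.
Lemma comm_mul_r (y h1 h2 : G) :
  comm y (h1 ** h2) = comm y h1 ** (h1 ** comm y h2 ** inv h1).
Proof. rewrite /comm; gsimp; done. Qed.
Lemma comm_mul_l (g1 g2 h : G) :
  comm (g1 ** g2) h = g1 ** comm g2 h ** inv g1 ** comm g1 h.
Proof. rewrite /comm; gsimp; done. Qed.
Lemma conj_comm (a g : G) : a ** g ** inv a = comm a g ** g.
Proof. rewrite /comm; gsimp; done. Qed.
End Grp2.

Section Pow.
Variable G : Grp.
Local Notation "a ** b" := (@gmul G a b) (at level 40, left associativity).
Local Notation e := (gone G).
Local Notation inv := (@ginv G).
Local Open Scope ring_scope.

Definition central (g : G) := forall x, g ** x = x ** g.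

Lemma gpow0 (g : G) : gpow g 0 = e. Proof. by []. Qed.
Lemma gpow1 (g : G) : gpow g 1 = g. Proof. by rewrite /gpow /= gmulg1. Qed.
Lemma gpowSn (g : G) (k : nat) : gpow g k.+1 = g ** gpow g k. Proof. by []. Qed.
Lemma gpow_e (k : nat) : gpow e k = e.
Proof. by elim: k => [|k IH] //; rewrite gpowSn IH gmul1. Qed.

Lemma gpow_comm (g : G) (k : nat) : g ** gpow g k = gpow g k ** g.
Proof.
elim: k => [|k IH]; first by rewrite gpow0 gmul1 gmulg1.
by rewrite gpowSn {1}IH gmulA.
Qed.

Lemma gpowS (g : G) (z : int) : gpow g (z + 1) = gpow g z ** g.
Proof.
case: z => k.
  have -> : (Posz k + 1 = Posz k.+1) by lia.
  by rewrite gpowSn gpow_comm.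
case: k => [|k].
  have -> : (Negz 0 + 1 = 0) by [].
  by rewrite /gpow /=; gsimp.
have -> : (Negz k.+1 + 1 = Negz k) by rewrite !NegzE; lia.
by rewrite /gpow [iter k.+2 _ _]iterS ginv_mul gmulVK.

Qed.

Lemma gpowB1 (g : G) (z : int) : gpow g (z - 1) = gpow g z ** inv g.
Proof.
have := gpowS g (z - 1); rewrite subrK => ->; by rewrite gmulKV.
Qed.

Lemma gpowD (g : G) (a b : int) : gpow g (a + b) = gpow g a ** gpow g b.
Proof.
case: b => k.
  elim: k => [|k IH]; first by rewrite addr0 gpow0 gmulg1.
  have -> : (a + Posz k.+1 = (a + Posz k) + 1) by lia.
  have -> : (Posz k.+1 = Posz k + 1) by lia.
  by rewrite !gpowS IH gmulA.
elim: k => [|k IH].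
  have -> : (Negz 0 = - 1) by [].
  by rewrite gpowB1 /gpow /= gmulg1.
have -> : (Negz k.+1 = Negz k - 1) by rewrite !NegzE; lia.
by rewrite addrA !gpowB1 IH gmulA.
Qed.

Lemma gpowN (g : G) (z : int) : gpow g (- z) = inv (gpow g z).
Proof. by apply: ginv_uniq; rewrite -gpowD subrr. Qed.

Lemma gpowM (g : G) (a b : int) : gpow (gpow g a) b = gpow g (a * b).
Proof.
have Hn : forall k : nat, gpow (gpow g a) k = gpow g (a * k).
  elim=> [|k IH]; first by rewrite mulr0.
  have -> : (Posz k.+1 = Posz k + 1) by lia.
  by rewrite gpowS IH mulrDr mulr1 gpowD.
case: b => k; first exact: Hn.
by rewrite NegzE gpowN Hn mulrN gpowN.
Qed.

Lemma gpow_inv (g : G) (z : int) : gpow (inv g) z = inv (gpow g z).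
Proof.
have Hn : forall k : nat, gpow (inv g) k = inv (gpow g k).
  elim=> [|k IH]; first by rewrite gpow0 ginv1.
  by rewrite gpowSn IH -ginv_mul gpowSn gpow_comm.
case: z => k; first exact: Hn.
by rewrite NegzE !gpowN Hn.
Qed.

Lemma central_inv (g : G) : central g -> central (inv g).
Proof. move=> Hg x; rewrite -{1}(gmulKV (inv g ** x) g) -(gmulA (inv g) x g) -Hg; gsimp; done. Qed.
Lemma central_mul (g h : G) : central g -> central h -> central (g ** h).
Proof. by move=> Hg Hh x; rewrite -gmulA Hh gmulA Hg gmulA. Qed.
Lemma central_gpow (g : G) z : central g -> central (gpow g z).
Proof.
move=> Hg.
have Hn : forall k : nat, central (gpow g k).
  elim=> [|k IH]; first by move=> x; rewrite gpow0 gmul1 gmulg1.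
  by rewrite gpowSn; apply: central_mul.
case: z => k; first exact: Hn.
exact: (central_inv (Hn k.+1)).
Qed.

Lemma gpow_mulC (g h : G) z : central g -> gpow (g ** h) z = gpow g z ** gpow h z.
Proof.
move=> Hg.
have Hn : forall k : nat, gpow (g ** h) k = gpow g k ** gpow h k.
  elim=> [|k IH]; first by rewrite !gpow0 gmulg1.
  rewrite !gpowSn IH -!gmulA; congr (_ ** _); rewrite !gmulA; congr (_ ** _).
  by rewrite (central_gpow k Hg).
case: z => k; first exact: Hn.
rewrite /gpow -/(gpow (g ** h) k.+1) -/(gpow g k.+1) -/(gpow h k.+1).
by rewrite Hn ginv_mul (central_inv (central_gpow k.+1 Hg)).
Qed.

Lemma hom_e (f : G -> G) : (forall x y, f (x ** y) = f x ** f y) -> f e = e.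
Proof. move=> Hf; apply: (@gmulI _ (f e)); by rewrite -Hf !gmulg1. Qed.
Lemma hom_inv (f : G -> G) : (forall x y, f (x ** y) = f x ** f y) ->
  forall x, f (inv x) = inv (f x).
Proof. by move=> Hf x; apply: ginv_uniq; rewrite -Hf gmulgV hom_e. Qed.
Lemma hom_gpow (f : G -> G) : (forall x y, f (x ** y) = f x ** f y) ->
  forall x z, f (gpow x z) = gpow (f x) z.
Proof.
move=> Hf x z.
have Hn : forall k : nat, f (gpow x k) = gpow (f x) k.
  elim=> [|k IH]; first by rewrite !gpow0 hom_e.
  by rewrite !gpowSn Hf IH.
case: z => k; first exact: Hn.
by rewrite /gpow -/(gpow x k.+1) -/(gpow (f x) k.+1) (hom_inv Hf) Hn.
Qed.

End Pow.

Section Lcs.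
Variable G : Grp.
Local Notation "a ** b" := (@gmul G a b) (at level 40, left associativity).
Local Notation e := (gone G).
Local Notation inv := (@ginv G).

Lemma gen_mono (S T : G -> Prop) x : (forall y, S y -> T y) -> gen S x -> gen T x.
Proof.
move=> ST; elim=> [|y Hy|y z _ IHy _ IHz|y _ IHy].
- exact: gen_one.
- by apply: gen_base; apply: ST.
- exact: gen_mul.
- exact: gen_inv.
Qed.

Lemma lcs0_e n : @lcs0 G n e.
Proof. by case: n => [|n] //=; apply: gen_one. Qed.
Lemma lcs0_mul n (x y : G) : lcs0 n x -> lcs0 n y -> lcs0 n (x ** y).
Proof. by case: n => [|n] //=; apply: gen_mul. Qed.
Lemma lcs0_inv n (x : G) : lcs0 n x -> lcs0 n (inv x).
Proof. by case: n => [|n] //=; apply: gen_inv. Qed.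
Lemma lcs0_comm_r n (g h : G) : lcs0 n h -> lcs0 n.+1 (comm g h).
Proof. by move=> Hh /=; apply: gen_base; exists g, h. Qed.
Lemma lcs0_comm_l n (g h : G) : lcs0 n h -> lcs0 n.+1 (comm h g).
Proof. by move=> Hh; rewrite -comm_inv; apply: lcs0_inv; apply: lcs0_comm_r. Qed.
Lemma lcs0_dec n (x : G) : lcs0 n.+1 x -> lcs0 n x.
Proof.
elim: n x => [|n IH] x //= Hx.
apply: gen_mono Hx => y [g [h [Hh ->]]].
by exists g, h; split => //; apply: IH.
Qed.
Lemma lcs0_le m n (x : G) : (m <= n)%N -> lcs0 n x -> lcs0 m x.
Proof.
move=> /subnK <-; elim: (n - m)%N => [|k IH] //= H.
by apply: IH; apply: lcs0_dec.
Qed.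
Lemma lcs0_conj n (a g : G) : lcs0 n g -> lcs0 n (a ** g ** inv a).
Proof.
move=> Hg; rewrite conj_comm; apply: lcs0_mul => //.
by apply: lcs0_dec; apply: lcs0_comm_r.
Qed.
Lemma lcs0_hom n (f : G -> G) : (forall x y, f (x ** y) = f x ** f y) ->
  forall x, lcs0 n x -> lcs0 n (f x).
Proof.
move=> Hf; elim: n => [|n IH] // x /=.
elim=> [|y Hy|y z _ IHy _ IHz|y _ IHy].
- by rewrite hom_e //; apply: gen_one.
- case: Hy => g [h [Hh ->]]; apply: gen_base; exists (f g), (f h); split; first exact: IH.
  by rewrite /comm !Hf !(hom_inv Hf).
- by rewrite Hf; apply: gen_mul.
- by rewrite (hom_inv Hf); apply: gen_inv.
Qed.

Lemma gen_hom_eq (S : G -> Prop) (F1 F2 : G -> G) :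
  (forall x y, F1 (x ** y) = F1 x ** F1 y) ->
  (forall x y, F2 (x ** y) = F2 x ** F2 y) ->
  (forall y, S y -> F1 y = F2 y) -> forall x, gen S x -> F1 x = F2 x.
Proof.
move=> H1 H2 HS x; elim=> [|y Hy|y z _ IHy _ IHz|y _ IHy].
- by rewrite !hom_e.
- exact: HS.
- by rewrite H1 H2 IHy IHz.
- by rewrite (hom_inv H1) (hom_inv H2) IHy.
Qed.

Variable t : nat.
Hypothesis Htriv : forall x : G, lcs0 t.+1 x -> x = e.

Lemma lcs_top_central (z : G) : lcs0 t z -> central z.
Proof.
move=> Hz g; have := Htriv (lcs0_comm_r g Hz); rewrite /comm => H.
have := f_equal (fun u => u ** z ** g) H; rewrite gmul1; gsimp; by move=> ->.
Qed.

Definition cmap (ys : seq G) (h : G) : G := foldl (fun acc y => comm y acc) h ys.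

Lemma cmap_lev ys n h : lcs0 n h -> lcs0 (size ys + n) (cmap ys h).
Proof.
elim: ys n h => [|y ys IH] n h //= Hh.
by have := IH n.+1 (comm y h) (lcs0_comm_r y Hh); rewrite addnS.
Qed.

Lemma cmap_hom ys : forall n, (size ys + n)%N = t ->
  (forall h1 h2, lcs0 n h1 -> lcs0 n h2 -> cmap ys (h1 ** h2) = cmap ys h1 ** cmap ys h2) /\
  (forall h c, lcs0 n h -> lcs0 n.+1 c -> cmap ys (h ** c) = cmap ys h).
Proof.
elim: ys => [|y ys IH] n /= Hn.
  rewrite /= add0n in Hn.
  split=> // h c _ Hc; by rewrite (Htriv (eq_ind _ (fun k => lcs0 k.+1 c) Hc _ Hn)) gmulg1.
have [IH1 IH2] := IH n.+1 (etrans (addnS _ _) Hn).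
have kill : forall d, lcs0 n.+2 d -> cmap ys d = e.
  move=> d Hd; have := IH2 e d (lcs0_e _) Hd; rewrite gmul1 => ->.
  apply: (@gmulI _ (cmap ys e)); rewrite -IH1 ?gmulg1 //; exact: lcs0_e.
split.
- move=> h1 h2 H1 H2; rewrite comm_mul_r conj_comm.
  have Hc : lcs0 n.+1 (comm y h2) by apply: lcs0_comm_r.
  have Hd : lcs0 n.+2 (comm h1 (comm y h2)) by apply: lcs0_comm_r.
  rewrite IH1; last by apply: lcs0_mul => //; apply: lcs0_dec.
    by rewrite (IH1 _ _ (lcs0_dec Hd) Hc) (kill _ Hd) gmul1.
  exact: lcs0_comm_r.
- move=> h c Hh Hc; rewrite comm_mul_r IH2 //; first exact: lcs0_comm_r.
  by apply: lcs0_conj; apply: lcs0_comm_r.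
Qed.

End Lcs.

Section Delta.
Variable G : Grp.
Local Notation "a ** b" := (@gmul G a b) (at level 40, left associativity).
Local Notation e := (gone G).
Local Notation inv := (@ginv G).
Local Open Scope ring_scope.

Variable delta : rat -> G -> G.
Hypothesis HQ : is_Qscalable delta.

Lemma delta_hom l a b : delta l (a ** b) = delta l a ** delta l b.
Proof.
case: HQ => H1 _ H3; have [->|l0] := eqVneq l 0; first by rewrite !H3 gmulg1.
by case: (H1 l l0) => Hh _; apply: Hh.
Qed.
Lemma delta_inj l : l != 0 -> injective (delta l).
Proof. case: HQ => H1 _ _ l0; case: (H1 l l0) => _ Hb; exact: bij_inj. Qed.
Lemma deltaM l m g : delta l (delta m g) = delta (l * m) g.
Proof. by case: HQ. Qed.
Lemma delta0 g : delta 0 g = e.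
Proof. by case: HQ. Qed.
Lemma delta1 g : delta 1 g = g.
Proof. apply: (@delta_inj 1) => //; by rewrite deltaM mulr1. Qed.
Lemma delta_comm l g h : delta l (comm g h) = comm (delta l g) (delta l h).
Proof. by rewrite /comm !delta_hom !(hom_inv (@delta_hom l)). Qed.
Lemma lcs0_delta n l g : lcs0 n g -> lcs0 n (delta l g).
Proof. exact: lcs0_hom (@delta_hom l) g. Qed.

Lemma V1_nat y : V1 delta y -> forall m : nat, delta m%:R y = gpow y m.
Proof.
move=> Hy; elim=> [|m IH]; first by rewrite delta0.
rewrite -natr1 Hy IH delta1.
have -> : (Posz m.+1 = Posz m + 1) by lia.
by rewrite gpowS.
Qed.

Lemma V1_int y : V1 delta y -> forall z : int, delta z%:~R y = gpow y z.
Proof.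
move=> Hy; case=> k; first exact: V1_nat.
rewrite NegzE gpowN -(V1_nat Hy k.+1).
have -> : ((- (Posz k.+1))%:~R = - (k.+1)%:R :> rat) by rewrite rmorphN.
have H : delta (- (k.+1%:R)) y ** delta (k.+1%:R) y = e by rewrite -Hy addNr delta0.
by apply: (@gmulIr _ (delta k.+1%:R y)); rewrite H gmulV.
Qed.

Lemma V1_delta q y : V1 delta y -> V1 delta (delta q y).
Proof. by move=> Hy a b; rewrite !deltaM mulrDl Hy. Qed.



Variable t : nat.
Hypothesis Htriv : forall x : G, lcs0 t.+1 x -> x = e.
Variable S0 : G -> Prop.
Hypothesis HS0 : forall y, S0 y -> V1 delta y.
Hypothesis Hgen : forall g, gen S0 g.

Lemma cmap_central (ys : seq G) n (h : G) : (size ys + n)%N = t -> lcs0 n h -> central (cmap ys h).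
Proof. by move=> Hn Hh; apply: (lcs_top_central Htriv); rewrite -Hn; apply: cmap_lev. Qed.

Lemma cmap_e (ys : seq G) n : (size ys + n)%N = t -> cmap ys e = e.
Proof.
move=> Hn; have [H1 _] := cmap_hom Htriv Hn.
apply: (@gmulI _ (cmap ys e)); rewrite -H1 ?gmulg1 //; exact: lcs0_e.
Qed.

Lemma cmap_kill (ys : seq G) n (d : G) : (size ys + n)%N = t -> lcs0 n.+1 d -> cmap ys d = e.
Proof.
move=> Hn Hd; have [_ H2] := cmap_hom Htriv Hn.
by have := H2 e d (@lcs0_e _ _) Hd; rewrite gmul1 (cmap_e Hn).
Qed.

Lemma cmap_inv (ys : seq G) n (u : G) : (size ys + n)%N = t -> lcs0 n u -> cmap ys (inv u) = inv (cmap ys u).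
Proof.
move=> Hn Hu; have [H1 _] := cmap_hom Htriv Hn.
by apply: ginv_uniq; rewrite -H1 ?gmulgV ?(cmap_e Hn) //; apply: lcs0_inv.
Qed.

Lemma keyQ n : forall ys : seq G, (size ys + n)%N = t -> forall h, lcs0 n h -> forall m : nat,
  cmap ys (delta m%:R h) = gpow (cmap ys h) (m ^ n.+1)%N.
Proof.
elim: n => [|n IH] ys Hn h Hh m.
  have [H1 _] := cmap_hom Htriv Hn.
  have H1' : forall a b, cmap ys (a ** b) = cmap ys a ** cmap ys b by move=> a b; apply: H1.
  rewrite expn1.
  apply: (gen_hom_eq (S := S0) (F1 := fun h => cmap ys (delta m%:R h))
                     (F2 := fun h => gpow (cmap ys h) m)) => //.
  - by move=> a b; rewrite delta_hom H1'.
  - move=> a b; rewrite H1' gpow_mulC //; exact: (cmap_central Hn).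
  - by move=> y Sy; rewrite (V1_nat (HS0 Sy)) (hom_gpow H1').
have [H1 H2] := cmap_hom Htriv Hn.
have HnS : (size ys + n.+2 = t.+1)%N by rewrite -Hn addnS.
have Hc : forall u, lcs0 n.+1 u -> central (cmap ys u) by move=> u; apply: cmap_central.
have {Hh} Hh : gen (fun y => exists g h, lcs0 n h /\ y = comm g h) h := Hh.
elim: Hh => [|y Hy|a b Ha IHa Hb IHb|a Ha IHa].
- by rewrite (hom_e (@delta_hom _)) (cmap_e Hn) gpow_e.
- case: Hy => g [h' [Hh' ->]].
  rewrite delta_comm.
  set h'' := delta m%:R h'.
  have Hh'' : lcs0 n h'' by apply: lcs0_delta.
  pose Phi g := cmap ys (comm g h'').
  have Phi_hom : forall g1 g2, Phi (g1 ** g2) = Phi g1 ** Phi g2.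
    move=> g1 g2; rewrite /Phi comm_mul_l conj_comm.
    have Hc1 : lcs0 n.+1 (comm g2 h'') by apply: lcs0_comm_r.
    have Hd : lcs0 n.+2 (comm g1 (comm g2 h'')) by apply: lcs0_comm_r.
    have Hd1 := lcs0_dec Hd.
    have Hg1 : lcs0 n.+1 (comm g1 h'') by apply: lcs0_comm_r.
    by rewrite (H1 _ _ (lcs0_mul Hd1 Hc1) Hg1) (H1 _ _ Hd1 Hc1) (cmap_kill Hn Hd) gmul1 Hc.
  have Hphi : forall g, Phi (delta m%:R g) = gpow (Phi g) m.
    move=> g0; apply: (gen_hom_eq (S := S0) (F1 := fun g => Phi (delta m%:R g))
                       (F2 := fun g => gpow (Phi g) m) _ _ _ (Hgen g0)).
    - by move=> a b; rewrite delta_hom Phi_hom.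
    - move=> a b; rewrite Phi_hom gpow_mulC //; apply: Hc; exact: lcs0_comm_r.
    - by move=> y0 Sy; rewrite (V1_nat (HS0 Sy)) (hom_gpow Phi_hom).
  rewrite -/(Phi (delta m%:R g)) Hphi /Phi.
  have Hn' : (size (g :: ys) + n)%N = t by rewrite -Hn /= addSnnS.
  have HI := IH (g :: ys) Hn' h' Hh' m.
  change (cmap ys (comm g h'')) with (cmap (g :: ys) h''); rewrite HI.
  change (cmap (g :: ys) h') with (cmap ys (comm g h')).
  by rewrite gpowM -PoszM -expnSr.
- rewrite delta_hom H1 ?H1 ?IHa ?IHb //; try exact: lcs0_delta.
  by rewrite gpow_mulC //; apply: Hc.
- rewrite (hom_inv (@delta_hom _)) !(cmap_inv Hn) ?IHa ?gpow_inv //.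
  exact: lcs0_delta.
Qed.
End Delta.

Local Open Scope ring_scope.

Lemma PoszX' (n k : nat) : (Posz n) ^+ k = Posz (n ^ k)%N.
Proof. elim: k => [|k IH]; first by rewrite expr0 expn0. by rewrite exprS expnS IH PoszM. Qed.

Lemma rat_eq_cross (n a : int) (d b : nat) : (0 < d)%N -> (0 < b)%N ->
  (n%:~R / d%:R = a%:~R / b%:R :> rat) -> n * b = a * d.
Proof.
move=> d0 b0 H. apply: (@intr_inj rat). rewrite !rmorphM /=.
have d0' : (d%:R != 0 :> rat) by rewrite pnatr_eq0 -lt0n.
have b0' : (b%:R != 0 :> rat) by rewrite pnatr_eq0 -lt0n.
rewrite -[n%:~R](@divfK _ d%:R) // H. field. done.
Qed.

Lemma rat_rep (q : rat) : exists a : int, exists2 b : nat, (0 < b)%N & q = a%:~R / b%:R.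
Proof.
have := denq_gt0 q; case E: (denq q) => [b|b] // b0.
exists (numq q), b => //; by rewrite -[LHS]divq_num_den E.
Qed.

Lemma lcs0_gpow (G : Grp) n (z : G) k : lcs0 n z -> lcs0 n (gpow z k).
Proof.
move=> Hz.
have Hn : forall j : nat, lcs0 n (gpow z j).
  elim=> [|j IH]; first exact: lcs0_e.
  by rewrite gpowSn; apply: lcs0_mul.
case: k => j; first exact: Hn.
exact: (lcs0_inv (Hn j.+1)).
Qed.

Lemma gpowMC (G : Grp) (g : G) (a b : int) : gpow (gpow g a) b = gpow (gpow g b) a.
Proof. by rewrite !gpowM mulrC. Qed.

Section Top.
Variable G : Grp.
Local Notation "a ** b" := (@gmul G a b) (at level 40, left associativity).
Local Notation e := (gone G).
Local Notation inv := (@ginv G).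
Variable delta : rat -> G -> G.
Hypothesis HQ : is_Qscalable delta.
Variable t : nat.
Hypothesis Htriv : forall x : G, lcs0 t.+1 x -> x = e.
Variable S0 : G -> Prop.
Hypothesis HS0 : forall y, S0 y -> V1 delta y.
Hypothesis Hgen : forall g, gen S0 g.
Hypothesis Ht1 : (0 < t)%N.

Local Notation T := (@lcs0 G t).
Local Notation sg := (sigma delta t.+1).

Lemma pow_top (z : G) (m : nat) : T z -> delta m%:R z = gpow z (m ^ t.+1)%N.
Proof. move=> Hz; exact: (keyQ HQ Htriv HS0 Hgen (ys := [::]) (erefl _) Hz m). Qed.

Lemma pow_inj (b : nat) (w u : G) : (0 < b)%N -> T w -> T u -> gpow w b = gpow u b -> w = u.
Proof.
move=> b0 Tw Tu H.
have H2 : delta b%:R w = delta b%:R u.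
  by rewrite !pow_top // expnS PoszM -!gpowM H.
by apply: (delta_inj HQ _ H2); rewrite pnatr_eq0 -lt0n.
Qed.

Lemma sigma_spec (q : rat) (z : G) (a : int) (b : nat) : (0 < b)%N -> q = a%:~R / b%:R ->
  T z -> T (sg q z) /\ gpow (sg q z) b = gpow z a.
Proof.
move=> b0 Hq Tz.
have [dn Hd dn0] : exists2 dn : nat, denq q = dn & (0 < dn)%N.
  by have := denq_gt0 q; case E: (denq q) => [dn|dn] // d0; exists dn.
have s1 : (t.+1 == 1%N) = false by case: t Ht1.
rewrite /sigma s1 Hd PoszX'.
set n := numq q.
set v := delta _ _.
have Tv : T v by apply: lcs0_delta => //; apply: lcs0_gpow.
split => //.
have dnR : (dn%:~R : rat) != 0 by rewrite pnatr_eq0 -lt0n.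
have H1 : delta dn%:R v = gpow z (n * (dn ^ t)%N).
  by rewrite /v (deltaM HQ) mulfV // delta1.
rewrite pow_top // expnS PoszM -gpowM -gpowM in H1.
have Hvd : gpow v dn = gpow z n.
  apply: (@pow_inj (dn ^ t)%N); rewrite ?expn_gt0 ?dn0 //; try exact: lcs0_gpow.
have Hnb : n * b = a * dn.
  apply: rat_eq_cross => //; rewrite -Hq /n -[RHS]divq_num_den Hd //.
apply: (@pow_inj dn) => //; try exact: lcs0_gpow.
by rewrite !gpowM (mulrC (Posz b)) -(gpowM v) Hvd gpowM Hnb.
Qed.

Lemma sigma_char (q : rat) (z w : G) (a : int) (b : nat) : (0 < b)%N -> q = a%:~R / b%:R ->
  T z -> T w -> gpow w b = gpow z a -> sg q z = w.
Proof.
move=> b0 Hq Tz Tw H.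
have [T1 H1] := sigma_spec b0 Hq Tz.
by apply: (pow_inj b0) => //; rewrite H1 H.
Qed.


Lemma clause2 (n : int) (m : nat) (z : G) : (0 < m)%N -> T z ->
  delta m%:R (sg (n%:~R / m%:R) z) = gpow z (n * (m%:Z) ^+ t).
Proof.
move=> m0 Tz; have [Tw Hw] := sigma_spec (q := n%:~R / m%:R) (a := n) m0 (erefl _) Tz.
by rewrite pow_top // expnS PoszM -gpowM Hw gpowM PoszX'.
Qed.

Lemma Tcentral (z : G) : T z -> central z.
Proof. exact: lcs_top_central. Qed.

Lemma clause3 : Qvector_space_on T sg.
Proof.
split.
- move=> q g Tg; have [a [b b0 Hq]] := rat_rep q.
  by have [] := sigma_spec b0 Hq Tg.
- move=> q p g Tg.
  have [aq [bq bq0 Hq]] := rat_rep q; have [ap [bp bp0 Hp]] := rat_rep p.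
  have [Tw Hw] := sigma_spec bp0 Hp Tg.
  have [Tu Hu] := sigma_spec bq0 Hq Tw.
  symmetry; apply: (sigma_char (a := aq * ap) (b := (bq * bp)%N)) => //.
  + by rewrite muln_gt0 bq0.
  + rewrite Hq Hp rmorphM /= natrM; field.
    by rewrite !pnatr_eq0 -!lt0n bq0 bp0.
  + by rewrite PoszM -gpowM Hu gpowMC Hw -gpowM gpowMC.
- move=> q p g Tg.
  have [aq [bq bq0 Hq]] := rat_rep q; have [ap [bp bp0 Hp]] := rat_rep p.
  have [Tw Hw] := sigma_spec bq0 Hq Tg.
  have [Tu Hu] := sigma_spec bp0 Hp Tg.
  symmetry; apply: (sigma_char (a := aq * bp + ap * bq) (b := (bq * bp)%N)) => //.
  + by rewrite muln_gt0 bq0.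
  + rewrite Hq Hp natrM rmorphD !rmorphM /= -!pmulrn; field.
    by rewrite !pnatr_eq0 -!lt0n bq0 bp0.
  + exact: lcs0_mul.
  + rewrite gpow_mulC; last exact: Tcentral.
    by rewrite PoszM -!gpowM Hw (gpowMC (sg p g)) Hu !gpowM gpowD.
- move=> g Tg; apply: (sigma_char (a := 1) (b := 1)) => //.
- move=> q g h Tg Th.
  have [a [b b0 Hq]] := rat_rep q.
  have [Tw Hw] := sigma_spec b0 Hq Tg.
  have [Tu Hu] := sigma_spec b0 Hq Th.
  symmetry; apply: (sigma_char (a := a) (b := b)) => //.
  + exact: lcs0_mul.
  + exact: lcs0_mul.
  + rewrite gpow_mulC; last exact: Tcentral.
    by rewrite Hw Hu gpow_mulC //; exact: Tcentral.
Qed.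

Lemma clause4 (xx w : G) (q : rat) : V1 delta xx -> lcs0 t.-1 w ->
  sg q (comm xx w) = comm (delta q xx) w.
Proof.
move=> Hxx Hw.
have Hw' : lcs0 t.-1.+1 = T by rewrite prednK.
have Tc : forall g, T (comm g w) by move=> g; rewrite -Hw'; apply: lcs0_comm_r.
have Psi_hom : forall g1 g2, comm (g1 ** g2) w = comm g1 w ** comm g2 w.
  move=> g1 g2; rewrite comm_mul_l.
  have Hc := Tcentral (Tc g2).
  by rewrite -(Hc g1) gmulKV (Tcentral (Tc g1)).
have [a [b b0 Hq]] := rat_rep q.
apply: (sigma_char (a := a) (b := b)) => //.
rewrite -!(hom_gpow (f := fun g => comm g w) Psi_hom).
rewrite -(V1_nat HQ (V1_delta HQ q Hxx)) (deltaM HQ) -(V1_int HQ Hxx).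
congr (comm (delta _ xx) w); rewrite Hq mulrC divfK //.
by rewrite pnatr_eq0 -lt0n.
Qed.
End Top.

Local Open Scope ring_scope.

Lemma step1_case (G : Grp) (delta : rat -> G -> G) (S0 : G -> Prop) :
  is_Qscalable delta -> (forall x : G, lcs0 1 x -> x = gone G) ->
  (forall y, S0 y -> V1 delta y) -> (forall g, gen S0 g) ->
  Qvector_space_on (@lcs G 1) (sigma delta 1).
Proof.
move=> HQ Htriv HS0 Hgen.
have Hc : forall g : G, central g by move=> g; apply: (lcs_top_central Htriv).
have HV : forall g, V1 delta g.
  move=> g; elim: (Hgen g) => [|y Hy|a b _ IHa _ IHb|a _ IHa].
  - by move=> u v; rewrite !(hom_e (@delta_hom _ _ HQ _)) gmulg1.
  - exact: HS0.
  - move=> u v; rewrite !(delta_hom HQ) IHa IHb -!gmulA; congr (gmul _ _).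
    by rewrite !gmulA (Hc (delta u b)).
  - move=> u v; rewrite !(hom_inv (@delta_hom _ _ HQ _)) IHa -ginv_mul.
    by rewrite (Hc (delta u a)).
rewrite /sigma /=.
split.
- by [].
- by move=> q p g _; rewrite (deltaM HQ).
- by move=> q p g _; rewrite HV.
- by move=> g _; rewrite (delta1 HQ).
- by move=> q g h _ _; rewrite (delta_hom HQ).
Qed.

Unset Implicit Arguments.

Theorem mainTheorem5 (G : Grp) (delta : rat -> G -> G) (s r : nat)
    (x : 'I_r -> G) :
  is_Qscalable delta ->
  nilpotent_step G s ->
  (forall i, V1 delta (x i)) ->
  (forall g : G, gen (fun y => exists (q : rat) (i : 'I_r), y = delta q (x i)) g) ->
  [/\ (* G^(s) is abelian *)
      (forall g h, @lcs G s g -> @lcs G s h -> gmul g h = gmul h g),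
      (* well-definedness for s >= 2: delta_m (sigma_{n/m} z) = z^(n m^(s-1)) *)
      ((2 <= s)%N -> forall (n : int) (m : nat), (0 < m)%N ->
         forall z, @lcs G s z ->
         delta m%:R (sigma delta s (n%:~R / m%:R) z) = gpow z (n * (m%:Z) ^+ s.-1)),
      (* G^(s) is a Q-vector space with scalar multiplication sigma *)
      Qvector_space_on (@lcs G s) (sigma delta s)
    & (* commutator formula *)
      ((2 <= s)%N -> forall xx w, V1 delta xx -> @lcs G s.-1 w ->
         forall q : rat, sigma delta s q (comm xx w) = comm (delta q xx) w)].
Proof.
move=> HQ [s1 [Htriv _]] Hx Hgen.
set S0 := fun y => exists (q : rat) (i : 'I_r), y = delta q (x i).
have HS0 : forall y, S0 y -> V1 delta y.
  by move=> y [q [i ->]]; apply: (V1_delta HQ).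
case: s s1 Htriv => [//|t] _ Htriv.
split.
- by move=> g h Hg _; apply: (lcs_top_central Htriv Hg).
- move=> s2 n m m0 z Hz.
  exact: (clause2 HQ Htriv HS0 Hgen (s2 : (0 < t)%N) n m0 Hz).
- case: t Htriv => [|t] Htriv; first exact: (step1_case HQ Htriv HS0 Hgen).
  exact: (clause3 HQ Htriv HS0 Hgen (ltn0Sn t)).
- move=> s2 xx w Hxx Hw q.
  exact: (clause4 HQ Htriv HS0 Hgen (s2 : (0 < t)%N) q Hxx Hw).
Qed.
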